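(* Let $k$ be a field of prime characteristic $p$, and let $V_1,V_2,\ldots$ be a sequence of $T$-spaces of $k_0\langle X\rangle$ such that (a) $(V_iV_j)^S=V_{i+j}$ for all $i,j\ge1$, and (b) $V_{2m+1}\subseteq V_{m+1}+V_1$ for all $m\ge1$. Let $I: i_1<i_2<i_3<\cdots$ be any increasing sequence of positive integers. Then there exists a set $J$ of positive integers (indices of the sequence) with $|J|\le i_2-i_1+1$ such that $1,2\in J$ and $\sum_{j\ge1} V_{i_j}=\sum_{j\in J}V_{i_j}$.
   Context: $X=\{x_1,x_2,\ldots\}$ is a countably infinite set and $k_0\langle X\rangle$ denotes the free associative (non-unital) $k$-algebra on $X$. A $T$-space is a $k$-subspace of $k_0\langle X\rangle$ invariant under every algebra endomorphism of $k_0\langle X\rangle$. For a subset $A$, $(A)^S$ denotes the $T$-space generated by $A$. For subsets $A,B$, $AB$ denotes $\{ab: a\in A, b\in B\}$. Sums of $T$-spaces are sums of subspaces. *)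

(* Defs.v *)
(* The free non-unital associative algebra k_0<X> on
   X = {x_0, x_1, ...} (countably many variables, indexed by nat) is modelled
   as the set of finitely supported functions from words (seq nat) to k that
   vanish on the empty word; equality is Leibniz equality of functions. *)
From mathcomp Require Import all_boot all_algebra.
Set Implicit Arguments. Unset Strict Implicit. Unset Printing Implicit Defensive.
Import GRing.Theory.
Local Open Scope ring_scope.

Definition word := seq nat.
Definition ncp (k : fieldType) := word -> k.

Section NC.
Variable k : fieldType.

Definition is_ncpoly (f : ncp k) : Prop :=
  f [::] = 0 /\ exists s : seq word, forall w, f w != 0 -> w \in s.

Definition nczero : ncp k := fun _ => 0.
Definition ncadd (f g : ncp k) : ncp k := fun w => f w + g w.
Definition ncscale (a : k) (f : ncp k) : ncp k := fun w => a * f w.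
(* concatenation product of words, extended bilinearly *)
Definition ncmul (f g : ncp k) : ncp k :=
  fun w => \sum_(i < (size w).+1) f (take i w) * g (drop i w).

Definition is_subspace (V : ncp k -> Prop) : Prop :=
  [/\ forall f, V f -> is_ncpoly f,
      V nczero,
      forall f g, V f -> V g -> V (ncadd f g)
    & forall a f, V f -> V (ncscale a f)].

(* algebra endomorphism of k_0<X> (only its values on k_0<X> matter) *)
Definition is_alg_endo (phi : ncp k -> ncp k) : Prop :=
  (forall f, is_ncpoly f -> is_ncpoly (phi f)) /\
  (forall f g, is_ncpoly f -> is_ncpoly g ->
     phi (ncadd f g) = ncadd (phi f) (phi g) /\
     phi (ncmul f g) = ncmul (phi f) (phi g)) /\
  (forall a f, is_ncpoly f -> phi (ncscale a f) = ncscale a (phi f)).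

Definition is_Tspace (V : ncp k -> Prop) : Prop :=
  is_subspace V /\ forall phi, is_alg_endo phi -> forall f, V f -> V (phi f).

(* (A)^S : the T-space generated by A (intersection of all T-spaces containing A) *)
Definition Tgen (A : ncp k -> Prop) : ncp k -> Prop :=
  fun f => forall V, is_Tspace V -> (forall g, A g -> V g) -> V f.

Definition prodset (A B : ncp k -> Prop) : ncp k -> Prop :=
  fun f => exists a b, [/\ A a, B b & f = ncmul a b].

Definition addsp (A B : ncp k -> Prop) : ncp k -> Prop :=
  fun f => exists a b, [/\ A a, B b & f = ncadd a b].

Definition sumsp (F : nat -> ncp k -> Prop) (P : nat -> Prop) : ncp k -> Prop :=
  fun f => exists (s : seq nat) (g : nat -> ncp k),
    (forall j, j \in s -> P j /\ F j (g j)) /\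
    f = (fun w => \sum_(j <- s) g j w).

Definition seteq (A B : ncp k -> Prop) : Prop := forall f, A f <-> B f.

End NC.

(* Main.v *)
Require Import Defs.
From mathcomp Require Import all_boot all_algebra.
From mathcomp Require Import zify.
From Stdlib Require Import Classical FunctionalExtensionality.
Set Implicit Arguments. Unset Strict Implicit. Unset Printing Implicit Defensive.
Import GRing.Theory.

Lemma ncpoly_add (k : fieldType) (f g : ncp k) :
  is_ncpoly f -> is_ncpoly g -> is_ncpoly (ncadd f g).
Proof.
move=> [f0 [s1 H1]] [g0 [s2 H2]]; split; first by rewrite /ncadd f0 g0 addr0.
exists (s1 ++ s2) => w; rewrite /ncadd mem_cat.
case: (eqVneq (f w) 0%R) => [->|/H1 -> //]; rewrite add0r => /H2 ->; by rewrite orbT.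
Qed.

Lemma addsp_T (k : fieldType) (A B : ncp k -> Prop) :
  is_Tspace A -> is_Tspace B -> is_Tspace (addsp A B).
Proof.
move=> [[A1 A2 A3 A4] A5] [[B1 B2 B3 B4] B5]; split; first split.
- by move=> f [a [b [Ha Hb ->]]]; apply: ncpoly_add; [apply: A1|apply: B1].
- exists (nczero k), (nczero k); split => //; apply: functional_extensionality => w.
  by rewrite /ncadd /nczero addr0.
- move=> f g [a [b [Ha Hb ->]]] [a' [b' [Ha' Hb' ->]]].
  exists (ncadd a a'), (ncadd b b'); split; [exact: A3|exact: B3|].
  apply: functional_extensionality => w; rewrite /ncadd; by rewrite addrACA.
- move=> c f [a [b [Ha Hb ->]]]; exists (ncscale c a), (ncscale c b).
  split; [exact: A4|exact: B4|].
  apply: functional_extensionality => w; by rewrite /ncadd /ncscale mulrDr.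
- move=> phi Hphi f [a [b [Ha Hb ->]]].
  have [_ [Hm _]] := Hphi.
  have [-> _] := Hm a b (A1 a Ha) (B1 b Hb).
  exists (phi a), (phi b); split; [exact: A5|exact: B5|done].
Qed.

Lemma ncmulDl (k : fieldType) (a1 a2 b : ncp k) :
  ncmul (ncadd a1 a2) b = ncadd (ncmul a1 b) (ncmul a2 b).
Proof.
apply: functional_extensionality => w; rewrite /ncmul /ncadd -big_split /=.
by apply: eq_bigr => i _; rewrite mulrDl.
Qed.

Lemma keyV (k : fieldType) (V : nat -> ncp k -> Prop) :
  (forall i, 0 < i -> is_Tspace (V i)) ->
  (forall i j, 0 < i -> 0 < j -> seteq (Tgen (prodset (V i) (V j))) (V (i + j))) ->
  (forall m, 0 < m -> forall f, V (2 * m + 1) f -> addsp (V (m + 1)) (V 1) f) ->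
  forall x e, 0 < x -> 0 < e -> forall f, V (x + 2 * e) f -> addsp (V (x + e)) (V x) f.
Proof.
move=> HT Hp Hb x e x0 e0 f.
case: x x0 => [//|l] _.
case: l => [|l].
  by rewrite add1n -addn1 => /(Hb e e0); rewrite addn1 add1n.
have E : l.+2 + 2 * e = 2 * e + 1 + l.+1 by lia.
rewrite E => Hf.
have := proj2 (Hp (2 * e + 1) l.+1 ltac:(lia) ltac:(lia) f) Hf.
apply; first by apply: addsp_T; apply: HT; lia.
move=> g [a [b [Ha Hb' ->]]].
have [a1 [a2 [Ha1 Ha2 ->]]] := Hb e e0 a Ha.
rewrite ncmulDl; exists (ncmul a1 b), (ncmul a2 b); split => //.
- have E2 : l.+2 + e = e + 1 + l.+1 by lia.
  rewrite E2; apply: (proj1 (Hp (e+1) l.+1 ltac:(lia) ltac:(lia) _)).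
  by move=> W _ HW; apply: HW; exists a1, b.
- have E2 : l.+2 = 1 + l.+1 by lia.
  rewrite E2; apply: (proj1 (Hp 1 l.+1 ltac:(lia) ltac:(lia) _)).
  by move=> W _ HW; apply: HW; exists a2, b.
Qed.

Inductive Wl (k : fieldType) (F : nat -> ncp k -> Prop) (P : nat -> Prop) : ncp k -> Prop :=
| Wl0 : Wl F P (nczero k)
| WlS j h f : P j -> F j h -> Wl F P f -> Wl F P (ncadd h f).

Lemma Wl_add (k : fieldType) F P (f g : ncp k) : Wl F P f -> Wl F P g -> Wl F P (ncadd f g).
Proof.
elim=> [|j h f' Pj Fh _ IH] Hg.
  have -> : ncadd (nczero k) g = g by apply: functional_extensionality => w; rewrite /ncadd /nczero add0r.
  done.
have -> : ncadd (ncadd h f') g = ncadd h (ncadd f' g)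
  by apply: functional_extensionality => w; rewrite /ncadd addrA.
by apply: (WlS Pj Fh); apply: IH.
Qed.

Lemma Wl_one (k : fieldType) F P j (h : ncp k) : P j -> F j h -> Wl F P h.
Proof.
move=> Pj Fh.
have -> : h = ncadd h (nczero k) by apply: functional_extensionality => w; rewrite /ncadd /nczero addr0.
by apply: (WlS Pj Fh); apply: Wl0.
Qed.

Lemma Wl_sumsp (k : fieldType) (F : nat -> ncp k -> Prop) (P : nat -> Prop) f :
  (forall j, P j -> forall a b, F j a -> F j b -> F j (ncadd a b)) ->
  Wl F P f -> sumsp F P f.
Proof.
move=> Hadd HW.
suff [s [g [_ H]]] : exists s g, uniq s /\
   ((forall j, j \in s -> P j /\ F j (g j)) /\ f = (fun w => (\sum_(j <- s) g j w)%R)).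
  by exists s, g.
elim: HW => [|j h f' Pj Fh _ [s [g [U [Hs ->]]]]].
  exists [::], (fun _ => nczero k); split => //; split => //.
  by apply: functional_extensionality => w; rewrite big_nil.
case: (boolP (j \in s)) => js.
- exists s, (fun i => if i == j then ncadd h (g j) else g i); split => //; split.
    move=> i iS; case: eqP => [->|_]; last by apply: Hs.
    by split => //; apply: Hadd => //; apply: (Hs j js).2.
  apply: functional_extensionality => w.
  rewrite /ncadd (bigD1_seq j js U) /= (bigD1_seq j js U) /= eqxx /ncadd -addrA; congr (_ + _)%R.
  congr (_ + _)%R; apply: eq_bigr => i /negbTE ->; done.
- exists (j :: s), (fun i => if i == j then h else g i); split; first by rewrite /= js.
  split.
    move=> i; rewrite in_cons; case: eqP => [-> _|_ /= iS]; first by split.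
    by apply: Hs.
  apply: functional_extensionality => w.
  rewrite /ncadd big_cons eqxx; congr (_ + _)%R.
  apply: eq_big_seq => i iS; case: eqP => // E; by move: js; rewrite -E iS.
Qed.

Lemma prog (P : nat -> Prop) :
  (forall x e, 0 < x -> 0 < e -> P x -> P (x + e) -> P (x + 2 * e)) ->
  forall x e, 0 < x -> 0 < e -> P x -> P (x + e) -> forall t, P (x + t * e).
Proof.
move=> R x e x0 e0 Px Pxe.
suff H : forall t, P (x + t * e) /\ P (x + t.+1 * e) by move=> t; case: (H t).
elim=> [|t [H1 H2]]; first by rewrite mul0n addn0 mul1n.
split => //.
have := R (x + t * e) e ltac:(lia) e0 H1.
have -> : x + t * e + e = x + t.+1 * e by lia.
have -> : x + t * e + 2 * e = x + t.+2 * e by lia.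
by apply.
Qed.

Lemma star (P : nat -> Prop) :
  (forall x e, 0 < x -> 0 < e -> P x -> P (x + e) -> P (x + 2 * e)) ->
  forall n u f h, f + h <= n -> 0 < u -> 0 < f -> 0 < h ->
  (forall t, P (u + t * f)) -> P (u + h) -> forall t, P (u + h + t * f).
Proof.
move=> R; elim=> [|n IH] u f h Hn u0 f0 h0 Hu Puh; first by lia.
suff Hf : P (u + h + f).
  apply: prog => //; lia.
case: (ltngtP h f) => Hhf.
- have Hh : forall t, P (u + t * h).
    apply: prog => //; by have := Hu 0; rewrite mul0n addn0.
  have := IH (u + h) h (f - h) ltac:(lia) ltac:(lia) h0 ltac:(lia).
  have E : forall t, u + h + t * h = u + t.+1 * h by move=> t; lia.
  have E2 : u + h + (f - h) = u + 1 * f by lia.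
  have Hh' : forall t, P (u + h + t * h) by move=> t; rewrite E.
  rewrite E2 => H; have := H Hh' (Hu 1) 1.
  by have -> : u + 1 * f + 1 * h = u + h + f by lia.
- have := IH (u + f) f (h - f) ltac:(lia) ltac:(lia) f0 ltac:(lia).
  have E : forall t, u + f + t * f = u + t.+1 * f by move=> t; lia.
  have E2 : u + f + (h - f) = u + h by lia.
  have Hu' : forall t, P (u + f + t * f) by move=> t; rewrite E.
  rewrite E2 => H; have := H Hu' Puh 1.
  by rewrite mul1n.
- subst h; have := Hu 2; by have -> : u + 2 * f = u + f + f by lia.
Qed.

Theorem proposition2p1 (k : fieldType) (p : nat)
  (V : nat -> ncp k -> Prop) (I : nat -> nat) :
  prime p -> (p \in [pchar k])%R ->
  (forall i, 0 < i -> is_Tspace (V i)) ->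
  (forall i j, 0 < i -> 0 < j -> seteq (Tgen (prodset (V i) (V j))) (V (i + j))) ->
  (forall m, 0 < m -> forall f, V (2 * m + 1) f -> addsp (V (m + 1)) (V 1) f) ->
  0 < I 1 -> (forall j, 0 < j -> I j < I j.+1) ->
  exists J : seq nat,
    [/\ uniq J, all (fun j => 0 < j) J, size J <= I 2 - I 1 + 1,
        (1 \in J) && (2 \in J) &
        seteq (sumsp (fun j => V (I j)) (fun j => 0 < j))
              (sumsp (fun j => V (I j)) (fun j => j \in J))].
Proof.
move=> _ _ HT Hp Hb I1 Hinc.
set a := I 1. set d := I 2 - I 1.
have I12 := Hinc 1 isT.
have d0 : 0 < d by rewrite /d; lia.
have Imono : forall i j, 0 < i -> i <= j -> I i <= I j.
  move=> i j i0 /subnKC <-; elim: (j - i) => [|t IH]; first by rewrite addn0.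
  apply: leq_trans IH _; rewrite addnS; apply: ltnW; apply: Hinc; lia.
have Ipos : forall j, 0 < j -> 0 < I j.
  by move=> j j0; apply: leq_trans I1 (Imono 1 j isT j0).
have Hres : forall n, exists L : seq nat, [/\ size L <= n, all (fun j => 0 < j) L &
   forall j, 0 < j -> I j %% d < n ->
     exists b, [/\ b \in L, 0 < b, b <= j & I b %% d = I j %% d]].
  elim=> [|n [L [HL1 HL2 HL3]]]; first by exists [::]; split.
  case: (classic (exists j, (0 < j) && (I j %% d == n))) => [Hex|Hno].
  - case: (ex_minnP Hex) => m /andP [m0 /eqP Im] Hmin.
    exists (m :: L); split => /=; [lia| by rewrite m0 HL2 |].
    move=> j j0 Ij; case: (ltngtP (I j %% d) n) => Hc.
    + have [b [bL b0 bj Ib]] := HL3 j j0 Hc; exists b; split => //.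
      by rewrite in_cons bL orbT.
    + lia.
    + exists m; split => //; first by rewrite in_cons eqxx.
        by apply: Hmin; rewrite j0 Hc eqxx.
      by rewrite Im Hc.
  - exists L; split => //; first lia.
    move=> j j0 Ij; case: (ltngtP (I j %% d) n) => Hc; [by apply: HL3 | lia |].
    exfalso; apply: Hno; exists j; by rewrite j0 Hc eqxx.
have [L [HL1 HL2 HL3]] := Hres d.
have L1 : 1 \in L.
  have [b [bL b0 b1 _]] := HL3 1 isT (ltn_pmod _ d0).
  by have -> : 1 = b by lia.
set J := undup (2 :: L).
have Jpos : forall j, j \in J -> 0 < j.
  move=> j; rewrite mem_undup in_cons => /orP [/eqP -> //| /(allP HL2)]; done.
exists J; split.
- exact: undup_uniq.
- by apply/allP => j /Jpos.
- apply: leq_trans (size_undup _) _; rewrite /=; lia.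
- by rewrite !mem_undup !in_cons L1 eqxx !orbT.
set Pc := fun n => forall f, V n f -> Wl (fun j => V (I j)) (fun j => j \in J) f.
have R : forall x e, 0 < x -> 0 < e -> Pc x -> Pc (x + e) -> Pc (x + 2 * e).
  move=> x e x0 e0 Px Pxe f /(keyV HT Hp Hb x0 e0) [g [h [Hg Hh ->]]].
  by apply: Wl_add; [apply: Pxe | apply: Px].
have PJ : forall j, j \in J -> Pc (I j) by move=> j jJ f Hf; apply: (Wl_one jJ Hf).
have cover : forall j, 0 < j -> Pc (I j).
  move=> j j0.
  have [b [bL b0 bj Ib]] := HL3 j j0 (ltn_pmod _ d0).
  have bJ : b \in J by rewrite mem_undup in_cons bL orbT.
  have Ha : forall t, Pc (a + t * d).
    apply: prog => //; first by apply: PJ; rewrite mem_undup in_cons L1 orbT.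
    have -> : a + d = I 2 by rewrite /a /d; lia.
    by apply: PJ; rewrite mem_undup in_cons eqxx.
  have Hbt : forall t, Pc (I b + t * d).
    case: (ltngtP b 1) => Hb1; first lia.
    - have Hab : a < I b by have := Imono 2 b isT Hb1; rewrite /a; lia.
      have H := @star Pc R (d + (I b - a)) a d (I b - a) (leqnn _) I1 d0
                 ltac:(lia) Ha.
      have E : a + (I b - a) = I b by lia.
      rewrite E in H; apply: H; by apply: PJ.
    - by rewrite Hb1.
  have Hle : I b <= I j := Imono b j b0 bj.
  have Hdv : d %| I j - I b by rewrite -eqn_mod_dvd // Ib.
  by have := Hbt ((I j - I b) %/ d); rewrite divnK // subnKC.
have Hadd : forall j, j \in J -> forall x y, V (I j) x -> V (I j) y -> V (I j) (ncadd x y).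
  move=> j jJ x y Hx Hy; have [[_ _ H _] _] := HT (I j) (Ipos j (Jpos j jJ)).
  exact: H x y Hx Hy.
split.
- move=> [s [g [Hs ->]]]; apply: Wl_sumsp => //.
  elim: s Hs => [|j s IHs] Hs.
    have -> : (fun w => (\sum_(j <- [::]) g j w)%R) = nczero k
      by apply: functional_extensionality => w; rewrite big_nil.
    exact: Wl0.
  have -> : (fun w => (\sum_(i <- j :: s) g i w)%R) = ncadd (g j) (fun w => (\sum_(i <- s) g i w)%R)
    by apply: functional_extensionality => w; rewrite big_cons.
  have [j0 Hg] := Hs j (mem_head _ _).
  apply: Wl_add; first exact: (cover j j0 _ Hg).
  by apply: IHs => i iS; apply: Hs; rewrite in_cons iS orbT.
- move=> [s [g [Hs ->]]]; exists s, g; split => // j js.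
  have [jJ Hg] := Hs j js; split => //; exact: Jpos.
Qed.
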